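(* Let $\mathbb{G}=(\mathcal{V},\mathcal{E})$ be a connected undirected graph on $\mathcal{V}=\{1,\dots,m\}$ with $\bar m$ edges and neighbor sets $\mathcal{N}_i$ ($i\notin\mathcal{N}_i$). For each edge $(i,j)$, in either order, let $A_{ij}\in\mathbb{R}^{d_{ij}\times n}$ have full row rank and $\boldsymbol{b}_{ij}\in\mathbb{R}^{d_{ij}}$, with $A_{ij}=A_{ji}$ and $\boldsymbol{b}_{ij}=-\boldsymbol{b}_{ji}$. Assume there exist $\boldsymbol{x}_1,\dots,\boldsymbol{x}_m\in\mathbb{R}^n$ satisfying the edge agreements $A_{ij}(\boldsymbol{x}_i-\boldsymbol{x}_j)=\boldsymbol{b}_{ij}$ for all $(i,j)\in\mathcal{E}$, and that $\ker\bar H'\cap\operatorname{image}\bar P=\{\boldsymbol{0}\}$. Consider the continuous-time update $$\dot{\boldsymbol{x}}_i(t)=-\sum_{j\in\mathcal{N}_i}P_{ij}\big(\boldsymbol{x}_i(t)-\boldsymbol{x}_j(t)-\bar{\boldsymbol{b}}_{ij}\big),\qquad i\in\mathcal{V}.$$ Then each $\boldsymbol{x}_i(t)$ converges exponentially fast to a constant vector $\boldsymbol{x}_i^*$, and $\boldsymbol{x}_1^*,\dots,\boldsymbol{x}_m^*$ satisfy $A_{ij}(\boldsymbol{x}_i^*-\boldsymbol{x}_j^* )=\boldsymbol{b}_{ij}$ for all $(i,j)\in\mathcal{E}$.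
   Context: $'$ denotes transpose. $P_{ij}=A_{ij}'(A_{ij}A_{ij}')^{-1}A_{ij}$, $\bar{\boldsymbol{b}}_{ij}=A_{ij}'(A_{ij}A_{ij}')^{-1}\boldsymbol{b}_{ij}$. With a fixed enumeration/orientation of edges $(i_1,j_1),\dots,(i_{\bar m},j_{\bar m})$: $\bar P=\mathrm{diag}\{P_{i_1j_1},\dots,P_{i_{\bar m}j_{\bar m}}\}\in\mathbb{R}^{\bar mn\times\bar mn}$ (block diagonal), $H\in\mathbb{R}^{\bar m\times m}$ the oriented incidence matrix whose $l$-th row has $1$ in column $i_l$, $-1$ in column $j_l$, $0$ elsewhere, and $\bar H=H\otimes I_n$. *)

(* Defs.v *)
From HB Require Import structures.
From mathcomp Require Import all_boot all_order all_algebra.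
From mathcomp Require Import mxtens.
From mathcomp Require Import all_classical all_reals all_analysis.

Set Implicit Arguments.
Unset Strict Implicit.
Unset Printing Implicit Defensive.

Import Order.TTheory GRing.Theory Num.Theory.
Local Open Scope ring_scope.

(* Graph on vertices 'I_m given by a fixed enumeration of its mbar edges,
   edge l being oriented as (ei l, ej l). *)
Section Defs.
Variables (R : realType) (m mbar n : nat).
Variables (ei ej : 'I_mbar -> 'I_m).

Definition simple_edges : Prop :=
  (forall l, ei l != ej l) /\
  (forall l l', ((ei l == ei l') && (ej l == ej l')) ||
                ((ei l == ej l') && (ej l == ei l')) -> l = l').

Definition adj : rel 'I_m :=
  fun i j => [exists l, ((ei l == i) && (ej l == j)) || ((ei l == j) && (ej l == i))].

Definition connected_graph : Prop := forall i j, connect adj i j.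

Definition incidence : 'M[R]_(mbar, m) :=
  \matrix_(l, i) ((ei l == i)%:R - (ej l == i)%:R).
Definition Hbar : 'M[R]_(mbar * n, m * n) := tensmx incidence (1%:M : 'M[R]_n).

Variable d : 'I_mbar -> nat.
Variable A : forall l, 'M[R]_(d l, n).
Variable b : forall l, 'cV[R]_(d l).

Definition Pe (l : 'I_mbar) : 'M[R]_n :=
  (A l)^T *m invmx (A l *m (A l)^T) *m A l.
Definition bbare (l : 'I_mbar) : 'cV[R]_n :=
  (A l)^T *m invmx (A l *m (A l)^T) *m b l.

(* Pbar = diag{P_1,...,P_mbar} *)
Definition Pbar : 'M[R]_(mbar * n, mbar * n) :=
  \sum_(l < mbar) tensmx (delta_mx l l : 'M[R]_mbar) (Pe l).

(* For an ordered pair (i,j) of neighbours: A_ij = A_ji = A_l and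
   b_ij = b_l, b_ji = - b_l where l is the edge {i,j} oriented (i,j).
   Hence P_ij = P_ji = P_l, bbar_ij = bbar_l, bbar_ji = - bbar_l.
   (For a simple graph exactly one l contributes to each sum below.) *)
Definition Pij (i j : 'I_m) : 'M[R]_n :=
  \sum_(l < mbar | ((ei l == i) && (ej l == j)) || ((ei l == j) && (ej l == i))) Pe l.
Definition bbarij (i j : 'I_m) : 'cV[R]_n :=
  \sum_(l < mbar | (ei l == i) && (ej l == j)) bbare l
  - \sum_(l < mbar | (ei l == j) && (ej l == i)) bbare l.

Definition flow (x : 'I_m -> 'cV[R]_n) (i : 'I_m) : 'cV[R]_n :=
  - \sum_(j < m | adj i j) Pij i j *m (x i - x j - bbarij i j).

End Defs.

(* Main.v *)
Require Import Defs.
From HB Require Import structures.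
From mathcomp Require Import all_boot all_order all_algebra.
From mathcomp Require Import mxtens ring lra.
From mathcomp Require Import all_classical all_reals all_analysis.
Import Order.TTheory GRing.Theory Num.Theory.
Import numFieldNormedType.Exports.
Local Open Scope classical_set_scope.
Local Open Scope ring_scope.
Set Implicit Arguments. Unset Strict Implicit. Unset Printing Implicit Defensive.

Section An.
Variable R : realType.

Lemma derS (N : nat) (h : 'I_N -> R -> R) (t : R) (dh : 'I_N -> R) :
  (forall i, is_derive t 1 (h i) (dh i)) ->
  is_derive t 1 (fun s => \sum_i h i s) (\sum_i dh i).
Proof.
move=> H; have := is_derive_sum H.
by rewrite fct_sumE.
Qed.

Lemma derM (f g : R -> R) (t df dg : R) : is_derive t 1 f df -> is_derive t 1 g dg ->
  is_derive t 1 (fun s => f s * g s) (f t * dg + g t * df).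
Proof. move=> hf hg; exact: is_deriveM. Qed.

Lemma derD (f g : R -> R) (t df dg : R) : is_derive t 1 f df -> is_derive t 1 g dg ->
  is_derive t 1 (fun s => f s + g s) (df + dg).
Proof. move=> hf hg; exact: is_deriveD. Qed.

Lemma derB (f g : R -> R) (t df dg : R) : is_derive t 1 f df -> is_derive t 1 g dg ->
  is_derive t 1 (fun s => f s - g s) (df - dg).
Proof. move=> hf hg; exact: is_deriveB. Qed.

Lemma derC (c t : R) : is_derive t 1 (fun _ : R => c) 0.
Proof. exact: is_derive_cst. Qed.

Lemma derE (c t : R) : is_derive t 1 (fun s => expR (c * s)) (c * expR (c * t)).
Proof.
have hl : is_derive t 1 (fun s : R => c * s) c.
  have h1 := derM (derC c t) (@is_derive_id _ _ t 1).
  rewrite mulr1 mulr0 addr0 in h1.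
  exact: h1.
have d1 : derivable (fun s : R => c * s) t 1 by exact: ex_derive.
have d2 : derivable (@expR R) (c * t) 1 by exact: ex_derive.
have -> : (fun s => expR (c * s)) = expR \o (fun s : R => c * s) by [].
apply: DeriveDef.
  apply/derivable1_diffP.
  by apply: differentiable_comp; apply/derivable1_diffP.
rewrite -derive1E derive1_comp // !derive1E (@derive_val _ _ _ _ _ _ _ hl).
by rewrite (@derive_val _ _ _ _ _ _ _ (is_derive_expR _)) mulrC.
Qed.

Definition wc (f : R -> R) := {within `[0%R, +oo[, continuous f}.

Lemma wcD f g : wc f -> wc g -> wc (fun s => f s + g s).
Proof. move=> hf hg x; exact: (@continuousD _ _ (subspace _) f g x (hf x) (hg x)). Qed.
Lemma wcM f g : wc f -> wc g -> wc (fun s => f s * g s).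
Proof. move=> hf hg x; exact: (@continuousM _ (subspace _) f g x (hf x) (hg x)). Qed.
Lemma wcN f : wc f -> wc (fun s => - f s).
Proof. move=> hf x; exact: (@continuousN _ _ (subspace _) f x (hf x)). Qed.
Lemma wcC c : wc (fun _ => c).
Proof. by move=> x; apply: cst_continuous. Qed.
Lemma wcS (N : nat) (h : 'I_N -> R -> R) : (forall i, wc (h i)) -> wc (fun s => \sum_i h i s).
Proof.
move=> H.
suff: forall r : seq 'I_N, wc (fun s => \sum_(i <- r) h i s) by apply.
elim=> [|i r IH].
  have -> : (fun s => \sum_(i <- [::]) h i s) = fun _ => 0 by apply/funext => s; rewrite big_nil.
  exact: wcC.
have -> : (fun s => \sum_(j <- i :: r) h j s) = fun s => h i s + \sum_(j <- r) h j s.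
  by apply/funext => s; rewrite big_cons.
exact: wcD.
Qed.

Lemma wcE c : wc (fun s => expR (c * s)).
Proof.
apply: continuous_subspaceT => x.
apply: continuous_comp; last exact: continuous_expR.
by apply: continuousM; [exact: cst_continuous | exact: id].
Qed.

Lemma mono_ni (f : R -> R) (df : R -> R) :
  (forall t : R, 0 < t -> is_derive t 1 f (df t)) -> (forall t : R, 0 < t -> df t <= 0) ->
  wc f -> forall s t, 0 <= s -> s <= t -> f t <= f s.
Proof.
move=> hd hn hc s t s0 st.
apply: (@ler0_derive1_nincry R f 0) => //.
- by move=> x; rewrite in_itv /= andbT => /hd H; exact: (@ex_derive _ _ _ _ _ _ _ H).
- by move=> x; rewrite in_itv /= andbT => x0; rewrite derive1E (@derive_val _ _ _ _ _ _ _ (hd x x0)) hn.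
Qed.
End An.
Arguments wcC {R} c.
Arguments derC {R} c t.
Arguments derE {R} c t.
Arguments wcE {R} c.

Section Alg.
Variables (R : realType) (m mbar n : nat) (ei ej : 'I_mbar -> 'I_m).
Variables (d : 'I_mbar -> nat) (A : forall l, 'M[R]_(d l, n)) (b : forall l, 'cV[R]_(d l)).
Hypothesis rf : forall l, row_free (A l).

Local Notation P := (Pe A).

Definition nrm (k : nat) (v : 'cV[R]_k) := (v^T *m v) 0 0.

Lemma nrmE k (v : 'cV[R]_k) : nrm v = \sum_j v j 0 ^+ 2.
Proof. by rewrite /nrm mxE; apply: eq_bigr => j _; rewrite mxE expr2. Qed.

Lemma nrm_ge0 k (v : 'cV[R]_k) : 0 <= nrm v.
Proof. by rewrite nrmE; apply: sumr_ge0 => j _; apply: sqr_ge0. Qed.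

Lemma nrm_eq0 k (v : 'cV[R]_k) : nrm v = 0 -> v = 0.
Proof.
rewrite nrmE => /psumr_eq0P H; apply/colP => j; rewrite mxE.
by apply/eqP; rewrite -sqrf_eq0; apply/eqP; apply: H => // i _; apply: sqr_ge0.
Qed.

Lemma unitAA l : A l *m (A l)^T \in unitmx.
Proof.
rewrite -row_free_unit; apply/inj_row_free => v hv.
have h1 : nrm ((v *m A l)^T) = 0.
  by rewrite /nrm trmxK trmx_mul mulmxA -(mulmxA v) hv mul0mx mxE.
have h2 : v *m A l = 0 *m A l by rewrite mul0mx -[v *m A l]trmxK (nrm_eq0 h1) trmx0.
exact: (row_free_inj (rf l) h2).
Qed.

Lemma PT l : (P l)^T = P l.
Proof. by rewrite /Pe !trmx_mul trmxK trmx_inv trmx_mul trmxK mulmxA. Qed.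

Lemma AP l : A l *m P l = A l.
Proof. by rewrite /Pe !mulmxA mulmxV ?unitAA // mul1mx. Qed.

Lemma PP l : P l *m P l = P l.
Proof. by rewrite {1}/Pe -!mulmxA AP mulmxA. Qed.

Lemma PAt l : P l *m (A l)^T = (A l)^T.
Proof. by rewrite -{1}PT -trmx_mul AP. Qed.

Lemma Pbb l : P l *m bbare A b l = bbare A b l.
Proof. by rewrite /bbare !mulmxA PAt. Qed.

Lemma Px0 l (v : 'cV_n) : A l *m v = b l -> P l *m v = bbare A b l.
Proof. by move=> hv; rewrite /Pe -mulmxA hv. Qed.

Lemma quadP l (v : 'cV_n) : (v^T *m P l *m v) 0 0 = nrm (P l *m v).
Proof. by rewrite /nrm trmx_mul PT mulmxA -(mulmxA _ (P l) (P l)) PP. Qed.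

Definition hc l : 'cV[R]_m := delta_mx (ei l) 0 - delta_mx (ej l) 0.

Definition Phi (E : 'M[R]_(n, m)) : 'M[R]_(n, m) :=
  \sum_l P l *m E *m hc l *m (hc l)^T.

Lemma Phi_lin : linear Phi.
Proof.
move=> a E F; rewrite /Phi scaler_sumr -big_split; apply: eq_bigr => l _ /=.
by rewrite (mulmxDr (P l)) -scalemxAr !mulmxDl !scalemxAl.
Qed.

HB.instance Definition _ := GRing.isLinear.Build R 'M[R]_(n, m) 'M[R]_(n, m) _ Phi Phi_lin.

Definition Lm := lin_mx Phi.

Lemma LmE E : mxvec E *m Lm = mxvec (Phi E).
Proof. exact: mul_vec_lin. Qed.

Definition ipr (N : nat) (u v : 'rV[R]_N) := \sum_a u 0 a * v 0 a.

Lemma sum_mxvec (F : 'I_(n * m) -> R) :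
  \sum_a F a = \sum_k \sum_i F (mxvec_index k i).
Proof.
rewrite pair_big /= (reindex (uncurry (@mxvec_index n m))).
  by apply: eq_bigr => -[k i].
by case: (curry_mxvec_bij n m) => g h1 h2; exists g => x _; [apply: h1 | apply: h2].
Qed.

Lemma ipr_vec (E F : 'M[R]_(n, m)) : ipr (mxvec E) (mxvec F) = \tr (E^T *m F).
Proof.
rewrite /ipr sum_mxvec /mxtrace exchange_big /=; apply: eq_bigr => i _.
rewrite mxE; apply: eq_bigr => k _; by rewrite !mxvecE mxE.
Qed.


Definition Q l (U V : 'M[R]_(n, m)) := ((U *m hc l)^T *m P l *m (V *m hc l)) 0 0.

Lemma trPhi U V : \tr (U^T *m Phi V) = \sum_l Q l U V.
Proof.
rewrite /Phi mulmx_sumr raddf_sum; apply: eq_bigr => l _.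
change (\tr (U^T *m (P l *m V *m hc l *m (hc l)^T)) = Q l U V).
by rewrite mulmxA mxtrace_mulC trace_mx11 /Q trmx_mul !mulmxA.
Qed.

Definition Bf (u v : 'rV[R]_(n * m)) := ipr u (v *m Lm).

Lemma BfE u v : Bf u v = \sum_l Q l (vec_mx u) (vec_mx v).
Proof. by rewrite /Bf -[u]vec_mxK -[v]vec_mxK LmE ipr_vec trPhi !mxvecK. Qed.

Lemma m11T (M : 'M[R]_1) : M 0 0 = M^T 0 0.
Proof. by rewrite mxE. Qed.

Lemma Qsym l U V : Q l U V = Q l V U.
Proof. by rewrite /Q m11T (trmx_mul ((U *m hc l)^T *m P l)) (trmx_mul _ (P l)) trmxK PT mulmxA. Qed.

Lemma QUU l U : Q l U U = nrm (P l *m (U *m hc l)).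
Proof. by rewrite /Q quadP. Qed.

Lemma QlD l U V W t : Q l (U + t *: V) W = Q l U W + t * Q l V W.
Proof.
by rewrite /Q mulmxDl -scalemxAl linearD linearZ /= !mulmxDl -!scalemxAl !mxE.
Qed.

Lemma disc (a be c : R) : 0 <= c -> (forall t, 0 <= a + t * (2 * be) + t ^+ 2 * c) ->
  be ^+ 2 <= a * c.
Proof.
move=> c0 H; have [cz|cp] := eqVneq c 0.
  rewrite cz mulr0; have [bz|bn] := eqVneq be 0; first by rewrite bz expr0n.
  have := H (- (a + 1) / (2 * be)); rewrite cz mulr0 addr0.
  have h2 : 2 * be != 0 by rewrite mulf_neq0 // pnatr_eq0.
  rewrite mulfVK // => h; exfalso; move: h.
  by rewrite opprD addrA subrr sub0r oppr_ge0 ler10.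
have cpos : 0 < c by rewrite lt_def cp c0.
have := H (- (be / c)).
have -> : a + - (be / c) * (2 * be) + (- (be / c)) ^+ 2 * c = a - be ^+ 2 / c.
  by field.
by rewrite subr_ge0 ler_pdivrMr // mulrC.
Qed.

Lemma CS (N : nat) (F : 'rV[R]_N -> 'rV[R]_N -> R) :
  (forall u v w t, F (u + t *: v) w = F u w + t * F v w) ->
  (forall u v, F u v = F v u) -> (forall u, 0 <= F u u) ->
  forall u v, (F u v) ^+ 2 <= F u u * F v v.
Proof.
move=> FD Fs Fp u v; apply: disc => // t.
have := Fp (u + t *: v); rewrite FD (Fs u) (Fs v) !FD (Fs v u).
by move=> h; apply: (le_trans h); rewrite le_eqVlt; apply/orP; left; apply/eqP; ring.
Qed.

Lemma iprD (N : nat) (u v w : 'rV[R]_N) t : ipr (u + t *: v) w = ipr u w + t * ipr v w.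
Proof.
rewrite /ipr mulr_sumr -big_split; apply: eq_bigr => a _ /=.
by rewrite !mxE mulrDl mulrA.
Qed.

Lemma iprC (N : nat) (u v : 'rV[R]_N) : ipr u v = ipr v u.
Proof. by rewrite /ipr; apply: eq_bigr => a _; rewrite mulrC. Qed.

Lemma ipr_ge0 (N : nat) (u : 'rV[R]_N) : 0 <= ipr u u.
Proof. by apply: sumr_ge0 => a _; rewrite -expr2 sqr_ge0. Qed.

Lemma BfD u v w t : Bf (u + t *: v) w = Bf u w + t * Bf v w.
Proof. by rewrite /Bf iprD. Qed.

Lemma BfC u v : Bf u v = Bf v u.
Proof. by rewrite !BfE; apply: eq_bigr => l _; rewrite Qsym. Qed.

Lemma Bf_ge0 u : 0 <= Bf u u.
Proof. by rewrite BfE; apply: sumr_ge0 => l _; rewrite QUU nrm_ge0. Qed.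


Lemma CSi (N : nat) (u v : 'rV[R]_N) : (ipr u v) ^+ 2 <= ipr u u * ipr v v.
Proof. exact: (CS (@iprD N) (@iprC N) (@ipr_ge0 N)). Qed.

Lemma CSB u v : (Bf u v) ^+ 2 <= Bf u u * Bf v v.
Proof. exact: (CS BfD BfC Bf_ge0). Qed.

Lemma iprG (N M : nat) (f : 'rV[R]_N) (G : 'M[R]_(N, M)) :
  ipr (f *m G) (f *m G) <= (\sum_a \sum_c G a c ^+ 2) * ipr f f.
Proof.
rewrite {1}/ipr exchange_big mulr_suml /=; apply: ler_sum => c _.
have -> : (f *m G) 0 c = ipr f (col c G)^T.
  by rewrite mxE /ipr; apply: eq_bigr => a _; rewrite !mxE.
rewrite -expr2; apply: (le_trans (CSi _ _)); rewrite mulrC le_eqVlt; apply/orP; left.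
by apply/eqP; congr (_ * _); apply: eq_bigr => a _; rewrite !mxE expr2.
Qed.

Lemma key : exists k : R, 0 < k /\ forall e : 'rV[R]_(n * m),
  ipr (e *m Lm) (e *m Lm) <= k * Bf (e *m Lm) (e *m Lm).
Proof.
set G := pinvmx Lm; set K := \sum_a \sum_c G a c ^+ 2.
have K0 : 0 <= K by apply: sumr_ge0 => a _; apply: sumr_ge0 => c _; apply: sqr_ge0.
exists (K + 1); split; first by rewrite ltr_wpDl.
move=> e; set f := e *m Lm; set w := f *m G.
have wL : w *m Lm = f by apply: mulmxKpV; apply: submxMl.
set X := ipr f f; set Y := Bf f f.
have hX : X = Bf f w by rewrite /Bf wL.
have h1 : X ^+ 2 <= Y * Bf w w by rewrite {1}hX; apply: CSB.
have hZ : Bf w w = ipr w f by rewrite /Bf wL.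
have h2 : (ipr w f) ^+ 2 <= ipr w w * X := CSi w f.
have h3 : ipr w w <= K * X := iprG f G.
have X0 : 0 <= X := ipr_ge0 f.
have Y0 : 0 <= Y := Bf_ge0 f.
have Z0 : 0 <= ipr w f by rewrite -hZ; apply: Bf_ge0.
rewrite hZ in h1.
have h4 : X ^+ 2 * X ^+ 2 <= Y ^+ 2 * (K * X ^+ 2).
  apply: (le_trans (y := (Y * ipr w f) ^+ 2)).
    by rewrite -expr2 lerXn2r // ?nnegrE ?exprn_ge0 ?mulr_ge0.
  rewrite exprMn ler_wpM2l ?exprn_ge0 //.
  apply: (le_trans h2); rewrite expr2 mulrA ler_wpM2r //.
have [Xz|Xn] := eqVneq X 0; first by rewrite Xz mulr_ge0 // addr_ge0.
have X2 : 0 < X ^+ 2 by rewrite exprn_gt0 // lt_def Xn X0.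
have h5 : X ^+ 2 <= Y ^+ 2 * K.
  by move: h4; rewrite [Y ^+ 2 * _]mulrA ler_pM2r.
have h6 : X ^+ 2 <= ((K + 1) * Y) ^+ 2.
  apply: (le_trans h5); rewrite exprMn mulrC ler_wpM2r ?exprn_ge0 //; nra.
by rewrite -ler_sqr ?nnegrE ?mulr_ge0 ?addr_ge0.
Qed.


Lemma zm (V : zmodType) (p q x y : V) : p - q - (x - y) = p - x - (q - y).
Proof. by rewrite !opprB addrACA [RHS]addrACA (addrC (-x)). Qed.
Lemma zm2 (V : zmodType) (p q x y : V) : q - p - (y - x) = - (p - x - (q - y)).
Proof. by rewrite zm [RHS]opprB. Qed.

Hypothesis noloop : forall l, ei l != ej l.
Hypothesis uniq_e : forall l l', ((ei l == ei l') && (ej l == ej l')) ||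
  ((ei l == ej l') && (ej l == ei l')) -> l = l'.
Variable x0 : 'I_m -> 'cV[R]_n.
Hypothesis hx0 : forall l, A l *m (x0 (ei l) - x0 (ej l)) = b l.

Definition Em (X : 'I_m -> 'cV[R]_n) : 'M[R]_(n, m) := \matrix_(k, i) X i k 0.

Lemma colEmB X Y i : col i (Em X - Em Y) = X i - Y i.
Proof. by apply/colP => k; rewrite !mxE. Qed.

Lemma Zhc (Z : 'M[R]_(n, m)) l : Z *m hc l = col (ei l) Z - col (ej l) Z.
Proof. by rewrite /hc mulmxBr -!colE. Qed.

Lemma hcE l i : hc l i 0 = (ei l == i)%:R - (ej l == i)%:R.
Proof. by rewrite !mxE !andbT (eq_sym i) (eq_sym i). Qed.

Lemma Phi_col (Z : 'M[R]_(n, m)) i : col i (Phi Z) = \sum_l hc l i 0 *: (P l *m (Z *m hc l)).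
Proof.
rewrite /Phi colE mulmx_suml; apply: eq_bigr => l _.
rewrite -mulmxA -colE (mx11_scalar (col i (hc l)^T)) mul_mx_scalar !mulmxA.
by congr (_ *: _); rewrite !mxE.
Qed.

Definition pr l i j := ((ei l == i) && (ej l == j)) || ((ei l == j) && (ej l == i)).

Lemma term X l i j : pr l i j ->
  P l *m (X i - X j - bbarij ei ej A b i j) =
  hc l i 0 *: (P l *m ((Em X - Em x0) *m hc l)).
Proof.
rewrite Zhc !colEmB hcE => /orP [/andP [/eqP ei_i /eqP ej_j]|/andP [/eqP ei_j /eqP ej_i]].
- have ij : (j == i) = false by rewrite -ei_i -ej_j eq_sym; apply/negbTE.
  rewrite ei_i ej_j eqxx ij subr0 scale1r.
  have -> : bbarij ei ej A b i j = bbare A b l.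
    rewrite /bbarij (big_pred1 l); last first.
      move=> l' /=; apply/idP/idP => [/andP [/eqP h1 /eqP h2]|/eqP ->].
        by apply/eqP; apply: uniq_e; rewrite h1 h2 ei_i ej_j !eqxx.
      by rewrite ei_i ej_j !eqxx.
    rewrite big_pred0 ?subr0 // => l'; apply/negbTE/negP => /andP [/eqP h1 /eqP h2].
    have e : l' = l by apply: uniq_e; rewrite h1 h2 ei_i ej_j !eqxx orbT.
    by move: ij; rewrite -h1 e ei_i eqxx.
  by rewrite -(Px0 (hx0 l)) mulmxBr mulmxA PP -mulmxBr ei_i ej_j zm.
- have ij : (j == i) = false by rewrite -ej_i -ei_j; apply/negbTE.
  rewrite ei_j ej_i eqxx ij sub0r scaleN1r.
  have -> : bbarij ei ej A b i j = - bbare A b l.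
    rewrite /bbarij [X in X - _]big_pred0; last first.
      move=> l'; apply/negbTE/negP => /andP [/eqP h1 /eqP h2].
      have e : l' = l by apply: uniq_e; rewrite h1 h2 ei_j ej_i !eqxx orbT.
      by move: ij; rewrite -ei_j -h1 e eqxx.
    rewrite (big_pred1 l) ?sub0r // => l' /=; apply/idP/idP => [/andP [/eqP h1 /eqP h2]|/eqP ->].
      by apply/eqP; apply: uniq_e; rewrite h1 h2 ei_j ej_i !eqxx.
    by rewrite ei_j ej_i !eqxx.
  rewrite -(Px0 (hx0 l)) opprK mulmxDr mulmxA PP -mulmxDr ei_j ej_i -mulmxN.
  by congr (_ *m _); rewrite [RHS]opprB -zm opprB.
Qed.


Lemma flow_eq X i : flow ei ej A b X i = - col i (Phi (Em X - Em x0)).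
Proof.
rewrite /flow Phi_col; congr (- _).
set F := fun j => Pij ei ej A i j *m (X i - X j - bbarij ei ej A b i j).
have -> : \sum_(j | adj ei ej i j) F j = \sum_j F j.
  rewrite [in RHS](bigID (adj ei ej i)) /= [X in _ = _ + X]big1 ?addr0 // => j nadj.
  rewrite /F /Pij big_pred0 ?mul0mx // => l; apply/negbTE.
  by move: nadj; rewrite /adj => /existsPn /(_ l).
rewrite /F; under eq_bigr => j _ do rewrite mulmx_suml.
under eq_bigr => j _ do (under eq_bigr => l hl do rewrite (term X hl)).
rewrite (exchange_big_dep xpredT) //=; apply: eq_bigr => l _.
have [/eqP ei_i|ne1] := boolP (ei l == i).
  rewrite (big_pred1 (ej l)) // => j /=.
  have -> : (ej l == i) = false by rewrite -ei_i eq_sym; apply/negbTE.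
  by rewrite andbF orbF eq_sym.
have [/eqP ej_i|ne2] := boolP (ej l == i).
  rewrite (big_pred1 (ei l)) // => j /=.
  by rewrite andbT eq_sym.
rewrite big_pred0; last first.
  by move=> j; rewrite /= andbF.
by rewrite hcE (negbTE ne1) (negbTE ne2) subrr scale0r.
Qed.


Lemma agree (u : 'rV[R]_(n * m)) : u *m Lm = 0 -> forall l, A l *m (vec_mx u *m hc l) = 0.
Proof.
move=> hu l.
have hB : Bf u u = 0 by rewrite /Bf hu /ipr big1 // => a _; rewrite mxE mulr0.
rewrite BfE in hB.
have Hq : forall l', true -> 0 <= Q l' (vec_mx u) (vec_mx u) by move=> l' _; rewrite QUU nrm_ge0.
have := @psumr_eq0P _ _ _ _ Hq hB l isT.
by rewrite QUU => /nrm_eq0 h; rewrite -[A l](AP l) -mulmxA h mulmx0.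
Qed.

Lemma vanish (y M lam : R) : 0 < lam ->
  (forall t, 0 <= t -> `|y| <= M * expR (- (lam * t))) -> y = 0.
Proof.
move=> l0 H; apply/eqP; apply/negPn/negP => yn.
set q := `|y|; have q0 : 0 < q by rewrite normr_gt0.
have := H 0 (le_refl _); rewrite mulr0 oppr0 expR0 mulr1 => qM.
set t := M / (q * lam).
have t0 : 0 <= t by rewrite divr_ge0 // ?mulr_ge0 // ?(le_trans (ltW q0) qM) // ltW.
have := H t t0; rewrite expRN => h.
set E := expR (lam * t).
have E0 : 0 < E := expR_gt0 _.
have h1 : q * E <= M by rewrite -ler_pdivlMr.
have h2 : 1 + lam * t <= E := expR_ge1Dx _.
have h3 : q * (lam * t) = M.
  by rewrite /t; field; rewrite !gt_eqF.
nra.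
Qed.


Lemma main_sec (x : R -> 'I_m -> 'cV[R]_n) :
  (forall i k, wc (fun s => x s i k ord0)) ->
  (forall t : R, 0 < t -> forall i k,
      is_derive t 1 (fun s => x s i k ord0) (flow ei ej A b (x t) i k ord0)) ->
  exists xs : 'I_m -> 'cV[R]_n,
    (exists c lam : R, 0 < lam /\
       forall t : R, 0 <= t -> forall i k,
         `|x t i k ord0 - xs i k ord0| <= c * expR (- (lam * t))) /\
    (forall l, A l *m (xs (ei l) - xs (ej l)) = b l).
Proof.
move=> hcont hd.
have [k [k0 hk]] := key.
set lam := k^-1.
have lam0 : 0 < lam by rewrite invr_gt0.
pose z s := mxvec (Em (x s) - Em x0).
have zE : forall s k' i, z s 0 (mxvec_index k' i) = x s i k' 0 - x0 i k' 0.
  by move=> s k' i; rewrite mxvecE !mxE.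
have dz : forall t : R, 0 < t -> forall a, is_derive t 1 (fun s => z s 0 a) (- (z t *m Lm) 0 a).
  move=> t t0 a; case/mxvec_indexP: a => k' i.
  have -> : (fun s => z s 0 (mxvec_index k' i)) = (fun s => x s i k' 0 - x0 i k' 0).
    by apply/funext => s; rewrite zE.
  rewrite LmE mxvecE.
  have -> : - Phi (Em (x t) - Em x0) k' i = flow ei ej A b (x t) i k' 0 - 0.
    by rewrite subr0 flow_eq !mxE.
  exact: derB (hd t t0 i k') (derC _ _).
have wcz : forall a, wc (fun s => z s 0 a).
  move=> a; case/mxvec_indexP: a => k' i.
  have -> : (fun s => z s 0 (mxvec_index k' i)) = (fun s => x s i k' 0 + - x0 i k' 0).
    by apply/funext => s; rewrite zE.
  exact: (wcD (hcont i k') (wcC (- x0 i k' 0))).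
pose f s := z s *m Lm.
have fE : forall s c, f s 0 c = \sum_a z s 0 a * Lm a c by move=> s c; rewrite mxE.
have df : forall t : R, 0 < t -> forall c, is_derive t 1 (fun s => f s 0 c) (- (f t *m Lm) 0 c).
  move=> t t0 c.
  have -> : (fun s => f s 0 c) = (fun s => \sum_a z s 0 a * Lm a c).
    by apply/funext => s; rewrite fE.
  apply: is_derive_eq (derS (fun a => derM (dz t t0 a) (derC (Lm a c) t))) _.
  rewrite mxE -sumrN; apply: eq_bigr => a _.
  by rewrite mulr0 add0r mulrN mulrC.
have wcf : forall c, wc (fun s => f s 0 c).
  move=> c; have -> : (fun s => f s 0 c) = (fun s => \sum_a z s 0 a * Lm a c).
    by apply/funext => s; rewrite fE.
  by apply: wcS => a; apply: wcM (wcz a) (wcC _).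
pose V s := ipr (f s) (f s).
have dV : forall t : R, 0 < t -> is_derive t 1 V (- (2 * Bf (f t) (f t))).
  move=> t t0; rewrite /V /ipr.
  apply: is_derive_eq (derS (fun c => derM (df t t0 c) (df t t0 c))) _.
  rewrite /Bf /ipr mulr_sumr -sumrN; apply: eq_bigr => c _.
  rewrite /f; ring.
have wcV : wc V.
  by apply: wcS => c; apply: wcM (wcf c) (wcf c).
pose g s := expR ((2 * lam) * s) * V s.
have dg : forall t : R, 0 < t -> is_derive t 1 g
    (expR ((2 * lam) * t) * (- (2 * Bf (f t) (f t))) + V t * ((2 * lam) * expR ((2 * lam) * t))).
  by move=> t t0; apply: derM (derE _ _) (dV t t0).
have g_ni : forall s t : R, 0 <= s -> s <= t -> g t <= g s.
  apply: (mono_ni dg); last by apply: wcM (wcE _) wcV.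
  move=> t t0.
  have hVB : lam * V t <= Bf (f t) (f t).
    have := hk (z t); rewrite -/(f t) -/(V t) => h.
    by rewrite -(ler_pM2l k0) mulrA divff ?gt_eqF // mul1r.
  have e0 := expR_gt0 ((2 * lam) * t).
  nra.
have Vb : forall t : R, 0 <= t -> V t <= V 0 * expR (- ((2 * lam) * t)).
  move=> t t0; have := g_ni 0 t (le_refl 0) t0; rewrite /g mulr0 expR0 mul1r => h.
  have -> : V t = (expR ((2 * lam) * t) * V t) * expR (- ((2 * lam) * t)).
    by rewrite mulrAC -expRD subrr expR0 mul1r.
  by rewrite ler_wpM2r // expR_ge0.
set C := V 0 + 1.
have V0 : 0 <= V 0 := ipr_ge0 _.
have C0 : 0 <= C by rewrite /C addr_ge0.
have fb : forall t : R, 0 <= t -> forall c, `|f t 0 c| <= C * expR (- (lam * t)).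
  move=> t t0 c.
  have h1 : f t 0 c ^+ 2 <= V t.
    rewrite /V /ipr (bigD1 c) //= expr2 lerDl; apply: sumr_ge0 => i _.
    by rewrite -expr2 sqr_ge0.
  have h2 := Vb t t0.
  have e2 : expR (- ((2 * lam) * t)) = expR (- (lam * t)) ^+ 2.
    by rewrite expr2 -expRD; congr expR; ring.
  rewrite e2 in h2.
  set e := expR (- (lam * t)) in h2 *; have e0 : 0 <= e := expR_ge0 _.
  have h3 : f t 0 c ^+ 2 <= (C * e) ^+ 2.
    apply: (le_trans h1); apply: (le_trans h2); rewrite exprMn ler_wpM2r ?exprn_ge0 //.
    rewrite /C; nra.
  by rewrite -ler_sqr ?nnegrE ?mulr_ge0 // real_normK ?num_real.
set D := C * k.
have hDl : D * lam = C by rewrite /D /lam -mulrA divff ?gt_eqF // mulr1.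
have D0 : 0 <= D by rewrite /D mulr_ge0 // ltW.
have dDe : forall t : R, is_derive t 1 (fun s => D * expR ((- lam) * s)) (- (C * expR (- (lam * t)))).
  move=> t; apply: is_derive_eq (derM (derC D t) (derE (- lam) t)) _.
  by rewrite mulr0 addr0 !mulNr -hDl; ring.
have wcDe : wc (fun s => D * expR ((- lam) * s)) by apply: wcM (wcC D) (wcE (- lam)).
have lim : forall a, exists l : R, forall t : R, 0 <= t ->
    `|z t 0 a - l| <= D * expR (- (lam * t)).
  move=> a.
  pose hp s := z s 0 a + D * expR ((- lam) * s).
  pose hn s := D * expR ((- lam) * s) - z s 0 a.
  have hp_ni : forall s t : R, 0 <= s -> s <= t -> hp t <= hp s.
    apply: (mono_ni (df := fun t => - (z t *m Lm) 0 a + - (C * expR (- (lam * t))))).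
    - by move=> t t0; exact: derD (dz t t0 a) (dDe t).
    - move=> t t0; have := fb t (ltW t0) a; rewrite ler_norml => /andP [h _].
      by rewrite -/(f t); lra.
    - exact: wcD (wcz a) wcDe.
  have hn_ni : forall s t : R, 0 <= s -> s <= t -> hn t <= hn s.
    apply: (mono_ni (df := fun t => - (C * expR (- (lam * t))) - - (z t *m Lm) 0 a)).
    - by move=> t t0; exact: derB (dDe t) (dz t t0 a).
    - move=> t t0; have := fb t (ltW t0) a; rewrite ler_norml => /andP [_ h].
      by rewrite -/(f t); lra.
    - exact: wcD wcDe (wcN (wcz a)).
  have eD : forall s, 0 <= D * expR ((- lam) * s) by move=> s; rewrite mulr_ge0 // expR_ge0.
  pose S := [set y | exists s, 0 <= s /\ y = z s 0 a - D * expR ((- lam) * s)].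
  have S0 : S !=set0 by exists (z 0 0 a - D * expR ((- lam) * 0)); exists 0.
  have Sub : forall t : R, 0 <= t -> ubound S (hp t).
    move=> t t0 y [s [s0 ->]].
    have [st|ts] := leP s t.
      have := hn_ni s t s0 st; rewrite /hn /hp; have := eD t; lra.
    have := hp_ni t s t0 (ltW ts); rewrite /hp; have := eD s; lra.
  exists (sup S) => t t0.
  have hs : ubound S (sup S).
    by apply: sup_upper_bound; split => //; exists (hp 0); apply: Sub.
  have l1 : z t 0 a - D * expR ((- lam) * t) <= sup S by apply: hs; exists t.
  have l2 : sup S <= hp t := ge_sup S0 (Sub t t0).
  move: l1 l2; rewrite /hp mulNr => l1 l2.
  by rewrite ler_norml; apply/andP; split; lra.
have [lf hlf] := fin_all_exists lim.
pose u : 'rV[R]_(n * m) := \row_a lf a.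
pose xs i : 'cV[R]_n := x0 i + \col_k' u 0 (mxvec_index k' i).
exists xs; split.
  exists D, lam; split => // t t0 i k'.
  have := hlf (mxvec_index k' i) t t0; rewrite zE !mxE.
  by rewrite opprD addrA.
have uL : u *m Lm = 0.
  apply/rowP => c; rewrite [RHS]mxE.
  apply: (@vanish _ (C + D * \sum_a `|Lm a c|) lam lam0) => t t0.
  have -> : (u *m Lm) 0 c = f t 0 c + \sum_a (u 0 a - z t 0 a) * Lm a c.
    by rewrite fE !mxE -big_split; apply: eq_bigr => a _ /=; ring.
  apply: (le_trans (ler_normD _ _)); rewrite mulrDl; apply: lerD; first exact: fb.
  apply: (le_trans (ler_norm_sum _ _ _)).
  rewrite mulr_sumr mulr_suml; apply: ler_sum => a _; rewrite normrM mulrAC.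
  apply: ler_wpM2r => //; have := hlf a t t0; rewrite distrC mxE.
  by [].
move=> l.
have e : xs (ei l) - xs (ej l) = (x0 (ei l) - x0 (ej l)) + vec_mx u *m hc l.
  by rewrite Zhc; apply/colP => k'; rewrite !mxE; ring.
by rewrite e mulmxDr hx0 agree // addr0.
Qed.

End Alg.

Theorem corollary1 (R : realType) (m mbar n : nat) (ei ej : 'I_mbar -> 'I_m)
  (d : 'I_mbar -> nat) (A : forall l, 'M[R]_(d l, n)) (b : forall l, 'cV[R]_(d l)) :
  simple_edges ei ej ->
  connected_graph ei ej ->
  (forall l, row_free (A l)) ->
  (exists x0 : 'I_m -> 'cV[R]_n,
      forall l, A l *m (x0 (ei l) - x0 (ej l)) = b l) ->
  (forall y : 'cV[R]_(mbar * n),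
      (Hbar R n ei ej)^T *m y = 0 ->
      (exists z, y = Pbar A *m z) -> y = 0) ->
  forall x : R -> 'I_m -> 'cV[R]_n,
  (forall i k, {within (`[0%R, +oo[ : set R), continuous (fun s : R => x s i k ord0)}) ->
  (forall t : R, 0 < t -> forall i k,
      is_derive t 1 (fun s => x s i k ord0) (flow ei ej A b (x t) i k ord0)) ->
  exists xs : 'I_m -> 'cV[R]_n,
    (exists c lam : R, 0 < lam /\
       forall t : R, 0 <= t -> forall i k,
         `|x t i k ord0 - xs i k ord0| <= c * expR (- (lam * t))) /\
    (forall l, A l *m (xs (ei l) - xs (ej l)) = b l).
Proof.
move=> [noloop uq] _ rf [x0 hx0] _ x hc hd.
exact: (main_sec rf noloop uq hx0 hc hd).
Qed.
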